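(* Let $E$ be a JB$^*$-triple in which tripotents are norm-total, and let $T:E\to E$ be a bounded linear map. The following are equivalent: (a) $T$ is a triple derivation; (b) $T$ is triple derivable at orthogonal pairs and, for each tripotent $e\in E$, the element $P_2(e)T(e)$ is skew-symmetric in the JB$^*$-algebra $E_2(e)$, i.e. $(P_2(e)T(e))^{*_e}=-P_2(e)T(e)$.
   Context: A JB$^*$-triple is a complex Banach space $E$ with a continuous triple product $\{\cdot,\cdot,\cdot\}$, bilinear and symmetric in the outer variables and conjugate-linear in the middle one, satisfying the Jordan identity $L(a,b)L(x,y)=L(x,y)L(a,b)+L(L(a,b)x,y)-L(x,L(b,a)y)$, such that $L(a,a)$ is hermitian with non-negative spectrum and $\|\{a,a,a\}\|=\|a\|^3$, where $L(a,b)x=\{a,b,x\}$. Elements $a,b$ are orthogonal ($a\perp b$) if $L(a,b)=0$. A linear map $T$ is triple derivable at orthogonal pairs if $\{T(a),b,c\}+\{a,T(b),c\}+\{a,b,T(c)\}=0$ for all $a,b,c$ with $a\perp b$. A triple derivation satisfies $\delta\{a,b,c\}=\{\delta a,b,c\}+\{a,\delta b,c\}+\{a,b,\delta c\}$. A tripotent is $e$ with $\{e,e,e\}=e$; $E_j(e)=\{x:\{e,e,x\}=\tfrac j2x\}$ ($j=0,1,2$), $E=E_2(e)\oplus E_1(e)\oplus E_0(e)$, with Peirce projections $P_j(e)$. $E_2(e)$ is a unital JB$^*$-algebra with unit $e$, product $x\circ_e y=\{x,e,y\}$ and involution $x^{*_e}=\{e,x,e\}$. Tripotents are norm-total in $E$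 if every element is a norm limit of finite linear combinations of mutually orthogonal tripotents. *)

(* Defs.v *)
From mathcomp Require Import all_boot all_order all_algebra.
From mathcomp Require Import all_classical all_reals all_analysis.
From mathcomp Require Import complex.
Import Order.TTheory GRing.Theory Num.Theory.
Set Implicit Arguments. Unset Strict Implicit. Unset Printing Implicit Defensive.
Local Open Scope ring_scope.
Local Open Scope complex_scope.

Section JBDefs.
Variable R : realType.
Variable E : completeNormedModType R[i].

(* Numerical-range definition of a hermitian operator (Bonsall--Duncan):
   f(Sx) is real whenever |x| = 1, f is a linear functional of norm <= 1 and f x = 1. *)
Definition hermitian_op (S : E -> E) : Prop :=
  forall (x : E) (f : E -> R[i]),
    `|x| = 1 ->
    (forall (a : R[i]) (y z : E), f (a *: y + z) = a * f y + f z) ->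
    (forall y, `|f y| <= `|y|) ->
    f x = 1 ->
    f (S x) \is Num.real.

(* sigma(S) is contained in [0, +oo): S - l Id is invertible for every l outside [0,+oo).
   (For bounded S on a Banach space, bijectivity = invertibility in B(E), by the open mapping theorem.) *)
Definition nonneg_spectrum (S : E -> E) : Prop :=
  forall l : R[i], ~~ (0 <= l) -> bijective (fun x => S x - l *: x).

Record JBtriple := {
  tp : E -> E -> E -> E;
  tp_linl : forall (a : R[i]) x x' y z, tp (a *: x + x') y z = a *: tp x y z + tp x' y z;
  tp_symm : forall x y z, tp x y z = tp z y x;
  tp_conjm : forall (a : R[i]) x y y' z, tp x (a *: y + y') z = a^* *: tp x y z + tp x y' z;
  tp_cont : continuous (fun p : E * (E * E) => tp p.1 p.2.1 p.2.2);
  tp_jordan : forall a b x y z,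
    tp a b (tp x y z) = tp x y (tp a b z) + tp (tp a b x) y z - tp x (tp b a y) z;
  tp_herm : forall a, hermitian_op (tp a a);
  tp_spec : forall a, nonneg_spectrum (tp a a);
  tp_norm : forall a, `|tp a a a| = `|a| ^+ 3
}.

Variable J : JBtriple.
Local Notation "{| x , y , z |}" := (tp J x y z).

Definition orthogonal (a b : E) : Prop := forall x, {| a, b, x |} = 0.

Definition tripotent (e : E) : Prop := {| e, e, e |} = e.

(* Peirce subspaces E_j(e) = { x | {e,e,x} = j/2 x } *)
Definition peirce2 (e x : E) : Prop := {| e, e, x |} = x.
Definition peirce1 (e x : E) : Prop := {| e, e, x |} = (2%:R)^-1 *: x.
Definition peirce0 (e x : E) : Prop := {| e, e, x |} = 0.

(* y = P_2(e) x : y is the E_2(e)-component of x in E = E_2(e) + E_1(e) + E_0(e) *)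
Definition peirce2_proj (e x y : E) : Prop :=
  peirce2 e y /\ exists y1 y0, peirce1 e y1 /\ peirce0 e y0 /\ x = y + y1 + y0.

Definition star_e (e x : E) : E := {| e, x, e |}.

Definition bounded_linear (T : E -> E) : Prop :=
  (forall (a : R[i]) x y, T (a *: x + y) = a *: T x + T y) /\
  exists M : R[i], forall x, `|T x| <= M * `|x|.

Definition triple_derivation (T : E -> E) : Prop :=
  forall a b c, T {| a, b, c |} = {| T a, b, c |} + {| a, T b, c |} + {| a, b, T c |}.

Definition triple_derivable_orth (T : E -> E) : Prop :=
  forall a b c, orthogonal a b ->
    {| T a, b, c |} + {| a, T b, c |} + {| a, b, T c |} = 0.

Definition tripotents_norm_total : Prop :=
  forall (x : E) (eps : R[i]), 0 < eps ->
    exists (n : nat) (c : 'I_n -> R[i]) (u : 'I_n -> E),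
      (forall i, tripotent (u i)) /\
      (forall i j, i != j -> orthogonal (u i) (u j)) /\
      `|x - \sum_(i < n) c i *: u i| < eps.

End JBDefs.

(* Main.v *)
From Pilot Require Import Defs.
From mathcomp Require Import all_boot all_order all_algebra.
From mathcomp Require Import all_classical all_reals all_analysis.
From mathcomp Require Import complex.
From mathcomp Require Import ring lra.
Import Order.TTheory GRing.Theory Num.Theory.
Set Implicit Arguments. Unset Strict Implicit. Unset Printing Implicit Defensive.
Local Open Scope ring_scope.
Local Open Scope complex_scope.

Section Alg.
Variable R : realType.
Variable E : completeNormedModType R[i].
Variable J : JBtriple E.
Local Notation tp := (tp J).

Lemma tp0l y z : tp 0 y z = 0.
Proof.
have := tp_linl J 1 0 0 y z; rewrite !scale1r addr0 => h.
by apply/(addrI (tp 0 y z)); rewrite addr0 -h.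
Qed.
Lemma tpDl x x' y z : tp (x + x') y z = tp x y z + tp x' y z.
Proof. by have := tp_linl J 1 x x' y z; rewrite !scale1r. Qed.
Lemma tpZl a x y z : tp (a *: x) y z = a *: tp x y z.
Proof. by have := tp_linl J a x 0 y z; rewrite !addr0 tp0l addr0. Qed.
Lemma tp0r x y : tp x y 0 = 0.
Proof. by rewrite (tp_symm J x) tp0l. Qed.
Lemma tpDr x y z z' : tp x y (z + z') = tp x y z + tp x y z'.
Proof. by rewrite (tp_symm J x) tpDl (tp_symm J z) (tp_symm J z'). Qed.
Lemma tpZr a x y z : tp x y (a *: z) = a *: tp x y z.
Proof. by rewrite (tp_symm J x) tpZl (tp_symm J z). Qed.
Lemma tp0m x z : tp x 0 z = 0.
Proof.
have := tp_conjm J 1 x 0 0 z; rewrite rmorph1 !scale1r addr0 => h.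
by apply/(addrI (tp x 0 z)); rewrite addr0 -h.
Qed.
Lemma tpDm x y y' z : tp x (y + y') z = tp x y z + tp x y' z.
Proof. by have := tp_conjm J 1 x y y' z; rewrite rmorph1 !scale1r. Qed.
Lemma tpZm a x y z : tp x (a *: y) z = conjc a *: tp x y z.
Proof. by have := tp_conjm J a x y 0 z; rewrite !addr0 tp0m addr0. Qed.
Lemma tpNl x y z : tp (- x) y z = - tp x y z.
Proof. by rewrite -scaleN1r tpZl scaleN1r. Qed.
Lemma tpNr x y z : tp x y (- z) = - tp x y z.
Proof. by rewrite -scaleN1r tpZr scaleN1r. Qed.
Lemma tpNm x y z : tp x (- y) z = - tp x y z.
Proof. by rewrite -scaleN1r tpZm rmorphN1 scaleN1r. Qed.
Lemma tpBl x x' y z : tp (x - x') y z = tp x y z - tp x' y z.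
Proof. by rewrite tpDl tpNl. Qed.
Lemma tpBr x y z z' : tp x y (z - z') = tp x y z - tp x y z'.
Proof. by rewrite tpDr tpNr. Qed.
Lemma tpBm x y y' z : tp x (y - y') z = tp x y z - tp x y' z.
Proof. by rewrite tpDm tpNm. Qed.

Lemma conj_half : ((2%:R : R[i])^-1)^* = 2%:R^-1.
Proof. by rewrite conjc_inv conjc_nat. Qed.

Variable e : E.
Hypothesis te : tp e e e = e.
Local Notation L := (tp e e).
Local Notation Q w := (tp e w e).

Lemma jor3 w z : tp e w z + tp (Q w) e z = (tp e (L w) z) *+ 2.
Proof.
have h1 := tp_jordan J e e e w z.
have h2 := tp_jordan J e w e e z.
rewrite te in h1.
rewrite (tp_symm J w e e) in h2.
rewrite h2 in h1.
move: h1; set X := L _; set Qt := tp (tp e w e) e z; set Lt := tp e (L w) z.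
set tw := tp e w z => h1.
have : X + (tw + Qt) = X + Lt *+ 2.
  rewrite {2}h1 mulr2n.
  rewrite [in X in _ = X]addrA [in X in _ = X]subrK [in X in _ = X]addrAC.
  by rewrite [in X in _ = X]subrK addrA addrAC.
by move/addrI.
Qed.

Lemma mulrn_inj n (v u : E) : (0 < n)%N -> v *+ n = u *+ n -> v = u.
Proof.
move=> n0; rewrite -(scaler_nat n v) -(scaler_nat n u) => /(f_equal (fun x => (n%:R : R[i])^-1 *: x)).
by rewrite !scalerA mulVf ?scale1r // pnatr_eq0 -lt0n.
Qed.

Lemma QL w : Q (L w) = Q w.
Proof.
have h4 := jor3 w e.
have h5 := tp_jordan J e e e w e.
rewrite te in h5.
rewrite (tp_symm J (tp e w e) e e) h5 in h4.
move: h4; set q := tp e w e; set ql := tp e (L w) e => h4.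
have h : q + (q + q) = ql *+ 2 + ql.
  by rewrite -h4 [in X in _ = X]addrA subrK.
apply/esym/(@mulrn_inj 3) => //.
by rewrite mulrS mulr2n h [in X in _ = X]mulrSr.
Qed.

Lemma LQ w : L (Q w) = Q w.
Proof.
have h5 := tp_jordan J e e e w e.
rewrite te QL in h5.
by rewrite h5 addrK.
Qed.


Lemma tpMnr n x y z : tp x y (z *+ n) = tp x y z *+ n.
Proof. by rewrite -(scaler_nat n z) tpZr scaler_nat. Qed.

Lemma QQ w : Q (Q w) = L (L w) *+ 2 - L w.
Proof.
have h := tp_jordan J w e e e e.
rewrite te (tp_symm J w e e) (tp_symm J (L w) e e) in h.
rewrite -mulr2n in h; move: h; set a := L (L w) *+ 2 => h.
by apply/esym; rewrite h opprB addrC subrK.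
Qed.

Lemma cubic w : L (L (L w)) *+ 2 = L (L w) *+ 3 - L w.
Proof.
have h := LQ (Q w).
rewrite QQ tpBr tpMnr in h.
move/(congr1 (fun v => v + L (L w))): h.
by rewrite subrK addrAC -mulrSr.
Qed.


Lemma ac4 (A B C D : E) : A + B + (C - D) = (A - D) + (B + C).
Proof. by rewrite [C - D]addrC addrACA addrC [B + C]addrC addrA. Qed.

Lemma two_neq0 : (2%:R : R[i]) != 0.
Proof. by rewrite pnatr_eq0. Qed.

Lemma L3 w : L (L (L w)) = (3%:R / 2%:R) *: L (L w) - 2%:R^-1 *: L w.
Proof.
have h := cubic w.
rewrite -(scaler_nat 2 (L (L (L w)))) -(scaler_nat 3 (L (L w))) in h.
move/(congr1 (fun v => (2%:R : R[i])^-1 *: v)): h.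
rewrite scalerA mulVf ?two_neq0 // scale1r => ->.
by rewrite scalerBr scalerA mulrC.
Qed.

Definition fv x (a b c : R[i]) := a *: x + b *: L x + c *: L (L x).

Lemma fvL x a b c : L (fv x a b c) = fv x 0 (a - c / 2%:R) (b + c * (3%:R / 2%:R)).
Proof.
rewrite /fv !tpDr !tpZr L3 scalerBr !scalerA scale0r add0r !scalerDl scaleNr.
by rewrite ac4.
Qed.

Lemma fvD x a b c a' b' c' : fv x a b c + fv x a' b' c' = fv x (a + a') (b + b') (c + c').
Proof. by rewrite /fv !scalerDl addrACA (addrACA (a *: x)). Qed.

Lemma fvN x a b c : - fv x a b c = fv x (- a) (- b) (- c).
Proof. by rewrite /fv !scaleNr !opprD. Qed.

Lemma fvZ x k a b c : k *: fv x a b c = fv x (k * a) (k * b) (k * c).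
Proof. by rewrite /fv !scalerDr !scalerA. Qed.

Lemma fvMn x n a b c : fv x a b c *+ n = fv x (a *+ n) (b *+ n) (c *+ n).
Proof. by rewrite -scaler_nat fvZ !mulr_natl. Qed.

Lemma fv_x x : x = fv x 1 0 0.
Proof. by rewrite /fv scale1r !scale0r !addr0. Qed.

Lemma fv_eq x a b c a' b' c' : a = a' -> b = b' -> c = c' -> fv x a b c = fv x a' b' c'.
Proof. by move=> -> -> ->. Qed.

Ltac fvsimp := repeat (rewrite ?fvL ?fvMn ?fvN ?fvD ?fvZ).

Definition p2 x := L (L x) *+ 2 - L x.
Definition p1 x := (L x - L (L x)) *+ 4.
Definition p0 x := x - L x *+ 3 + L (L x) *+ 2.

Lemma p2_fv x : p2 x = fv x 0 (-1) 2%:R.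
Proof.
rewrite /p2 [in X in X = _](fv_x x); fvsimp; apply: fv_eq.
all: by ring.
Qed.
Lemma p1_fv x : p1 x = fv x 0 4%:R (-4%:R).
Proof. rewrite /p1 [in X in X = _](fv_x x); fvsimp; apply: fv_eq; by ring. Qed.
Lemma p0_fv x : p0 x = fv x 1 (-3%:R) 2%:R.
Proof. rewrite /p0 [in X in X = _](fv_x x); fvsimp; apply: fv_eq; by ring. Qed.

Lemma Lp2 x : L (p2 x) = p2 x.
Proof. rewrite p2_fv; fvsimp; apply: fv_eq; by field. Qed.
Lemma Lp1 x : L (p1 x) = 2%:R^-1 *: p1 x.
Proof. rewrite p1_fv; fvsimp; apply: fv_eq; by field. Qed.
Lemma Lp0 x : L (p0 x) = 0.
Proof.
rewrite p0_fv; fvsimp; rewrite (@fv_eq x _ _ _ 0 0 0); try by field.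
by rewrite /fv !scale0r !addr0.
Qed.

Lemma p_sum x : p2 x + p1 x + p0 x = x.
Proof.
rewrite p2_fv p1_fv p0_fv !fvD {2}(fv_x x); apply: fv_eq; by ring.
Qed.
Lemma half_fix (v : E) : v = 2%:R^-1 *: v -> v = 0.
Proof.
move/(congr1 (fun u => (2%:R : R[i]) *: u)); rewrite scalerA mulfV ?two_neq0 // scale1r.
rewrite scaler_nat mulr2n => h.
by apply/(addrI v); rewrite addr0.
Qed.

Lemma Q_E0 w : L w = 0 -> Q w = 0.
Proof. by move=> h; rewrite -QL h tp0m. Qed.

Lemma Q_E1 w : L w = 2%:R^-1 *: w -> Q w = 0.
Proof. by move=> h; apply: half_fix; rewrite -{1}QL h tpZm conj_half. Qed.

Lemma orth_E0 w : L w = 0 -> forall z, tp e w z = 0.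
Proof.
move=> h z; have := jor3 w z.
by rewrite h Q_E0 // tp0l tp0m mul0rn addr0.
Qed.

Lemma Q_E2 w : L w = w -> Q (Q w) = w.
Proof. by move=> h; rewrite QQ !h mulr2n addrK. Qed.

Lemma peirce_rule x y z (al be ga : R[i]) :
  L x = al *: x -> L y = be *: y -> be^* = be -> L z = ga *: z ->
  L (tp x y z) = (al - be + ga) *: tp x y z.
Proof.
move=> hx hy hb hz.
rewrite (tp_jordan J e e x y z) hx hy hz tpZr tpZl tpZm hb.
by rewrite !scalerDl scaleNr [ga *: _ + _]addrC addrAC.
Qed.

Lemma component s0 s1 s2 : L s0 = 0 -> L s1 = 2%:R^-1 *: s1 -> L s2 = s2 ->
  s0 + s1 + s2 = 0 -> s0 = 0.
Proof.
move=> h0 h1 h2 h.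
have e0 : s0 = - (s1 + s2) by apply/eqP; rewrite -addr_eq0 addrA h.
have e1 : 2%:R^-1 *: s1 + s2 = 0.
  by rewrite -h1 -h2 -tpDr -[_ + _]opprK -e0 tpNr h0 oppr0.
have e2 : s2 = - (2%:R^-1 *: s1) by apply/eqP; rewrite -addr_eq0 addrC e1.
have e3 : (2%:R^-1 * 2%:R^-1 - 2%:R^-1) *: s1 = 0.
  have := congr1 L e1; rewrite tpDr tpZr h1 h2 tp0r scalerA.
  by move=> h3; rewrite e2 in h3; rewrite scalerBl.
have k : (2%:R^-1 * 2%:R^-1 - 2%:R^-1 : R[i]) = - 4%:R^-1 by field.
move: e3; rewrite k => /eqP; rewrite scaler_eq0 oppr_eq0 invr_eq0 pnatr_eq0 /= => /eqP s10.
by rewrite e0 e2 s10 scaler0 oppr0 addr0 oppr0.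
Qed.

Lemma ac5 (a b c : E) : (a + b + c) + (a + b) = a + (b + b) + (a + c).
Proof. by rewrite addrAC -!addrA; congr (_ + _); congr (_ + _); rewrite addrCA. Qed.

Lemma half_twice (v : E) : (2%:R^-1 *: v) *+ 2 = v.
Proof. by rewrite -scaler_nat scalerA mulfV ?two_neq0 // scale1r. Qed.

Lemma deriv_skew x y y1 y0 :
  tp x e e + tp e x e + tp e e x = x ->
  L y = y -> L y1 = 2%:R^-1 *: y1 -> L y0 = 0 -> x = y + y1 + y0 -> Q y = - y.
Proof.
move=> hd h2 h1 h0 hx.
rewrite (tp_symm J x e e) hx !tpDr !tpDm h2 h1 h0 addr0 (Q_E1 h1) (Q_E0 h0) !addr0 in hd.
have hy0 : y0 = y + Q y.
  apply/(addrI (y + y1)); rewrite -hd.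
  by rewrite -[X in _ = _ + X + _](half_twice y1) mulr2n ac5.
have : y + Q y = 0 by rewrite -hy0 -h0 hy0 tpDr h2 LQ.
by move/eqP; rewrite addrC addr_eq0 => /eqP.
Qed.
Lemma ac6 (A B C D F : E) : A + B + C + (D + F) = C + (B + D) + (A + F).
Proof. by rewrite [A + B + C]addrC -!addrA; congr (_ + _); rewrite addrCA; congr (_ + _); rewrite addrCA. Qed.

Lemma P0zero (T : E -> E) x y y1 y0 :
  (forall a b c, (forall z, tp a b z = 0) -> tp (T a) b c + tp a (T b) c + tp a b (T c) = 0) ->
  T e = x -> L y = y -> L y1 = 2%:R^-1 *: y1 -> L y0 = 0 -> x = y + y1 + y0 -> y0 = 0.
Proof.
move=> hd hT h2 h1 h0 hx.
have ho := orth_E0 h0.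
have hQ : Q (T y0) = 0.
  have := hd e y0 e ho; rewrite (tp_symm J (T e) y0 e) !ho add0r addr0 => //.
set w := T y0 in hQ *.
have w2 : p2 w = 0.
  rewrite -(p_sum w) (tpDm _ (p2 w + p1 w)) (tpDm _ (p2 w)) (Q_E1 (Lp1 w)) (Q_E0 (Lp0 w)) !addr0 in hQ.
  by rewrite -(Q_E2 (Lp2 w)) hQ tp0m.
have := hd e y0 y0 ho; rewrite ho addr0 hT -/w -(p_sum w) w2 hx (tpDl (y + y1)) (tpDl y) (tpDm _ (0 + p1 w)) (tpDm _ 0) tp0m add0r.
rewrite ac6 => hs.
have e1 : L e = 1 *: e by rewrite scale1r.
have f2 : L y = 1 *: y by rewrite scale1r.
have f0 : L y0 = 0 *: y0 by rewrite scale0r.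
have g0 : L (p0 w) = 0 *: p0 w by rewrite scale0r Lp0.
have c0 : (0 : R[i])^* = 0 by rewrite conjc0.
have c2 : ((2%:R : R[i])^-1)^* = 2%:R^-1 by exact: conj_half.
have k1 : (1 - 2%:R^-1 + 0 : R[i]) = 2%:R^-1 by field.
have hC : L (tp y0 y0 y0) = 0.
  by rewrite (peirce_rule f0 f0 c0 f0) subrr addr0 scale0r.
have hB : L (tp y1 y0 y0 + tp e (p1 w) y0) = 2%:R^-1 *: (tp y1 y0 y0 + tp e (p1 w) y0).
  rewrite tpDr (peirce_rule h1 f0 c0 f0) (peirce_rule e1 (Lp1 w) c2 f0).
  by rewrite k1 subr0 addr0 scalerDr.
have hA : L (tp y y0 y0 + tp e (p0 w) y0) = tp y y0 y0 + tp e (p0 w) y0.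
  rewrite tpDr (peirce_rule f2 f0 c0 f0) (peirce_rule e1 g0 c0 f0).
  by rewrite !subr0 !addr0 !scale1r.
have := component hC hB hA hs.
move/(congr1 (fun v => `|v|)); rewrite tp_norm normr0 => /eqP.
by rewrite expf_eq0 /= normr_eq0 => /eqP.
Qed.
Lemma Daux a b : L a = a -> L b = 2%:R^-1 *: b -> Q a = - a ->
  tp (a + b) e e + Q (a + b) + L (a + b) = a + b.
Proof.
move=> ha hb hq.
rewrite (tp_symm J (a + b) e e) !tpDr tpDm ha hb hq (Q_E1 hb) addr0.
by rewrite [a + _ - a]addrAC subrr add0r addrCA -mulr2n half_twice.
Qed.

Lemma Dtrip (T : E -> E) :
  (forall a b c, (forall z, tp a b z = 0) -> tp (T a) b c + tp a (T b) c + tp a b (T c) = 0) ->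
  (forall y, peirce2_proj J e (T e) y -> star_e J e y = - y) ->
  tp (T e) e e + tp e (T e) e + tp e e (T e) = T e.
Proof.
move=> hd hs; set x := T e.
have hy0 : p0 x = 0.
  apply: (P0zero hd (erefl _) (Lp2 x) (Lp1 x) (Lp0 x)); exact/esym/p_sum.
have hsk : Q (p2 x) = - p2 x.
  apply: hs; split; first exact: Lp2.
  exists (p1 x), (p0 x); split; first exact: Lp1.
  split; first exact: Lp0.
  exact/esym/p_sum.
have hx : x = p2 x + p1 x by rewrite -{1}(p_sum x) hy0 addr0.
rewrite hx; apply: Daux; [exact: Lp2 | exact: Lp1 | exact: hsk].
Qed.
End Alg.

Section Outer.
Variable R : realType.
Variable E : completeNormedModType R[i].
Variable J : JBtriple E.
Local Notation tp := (tp J).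
Variable T : E -> E.
Hypothesis Tlin : forall (a : R[i]) x y, T (a *: x + y) = a *: T x + T y.

Lemma T0 : T 0 = 0.
Proof.
have h := Tlin 1 0 0; rewrite !scale1r addr0 in h.
by apply/(addrI (T 0)); rewrite addr0 -h.
Qed.
Lemma TD x y : T (x + y) = T x + T y.
Proof. by have := Tlin 1 x y; rewrite !scale1r. Qed.
Lemma TZ a x : T (a *: x) = a *: T x.
Proof. by have := Tlin a x 0; rewrite !addr0 T0 addr0. Qed.

Definition D a b c := T (tp a b c) - (tp (T a) b c + tp a (T b) c + tp a b (T c)).

Lemma ac3 (P P' Q Q' S S' : E) : (P + P') + (Q + Q') + (S + S') = (P + Q + S) + (P' + Q' + S').
Proof. by rewrite (addrACA P) (addrACA (P + Q)). Qed.

Lemma Dsym a b c : D a b c = D c b a.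
Proof.
rewrite /D (tp_symm J a b c) (tp_symm J (T a) b c) (tp_symm J a (T b) c) (tp_symm J a b (T c)).
congr (_ - _); set X := tp c b (T a); set Z := tp (T c) b a.
by rewrite addrC [X + _]addrC addrA.
Qed.

Lemma DDl a a' b c : D (a + a') b c = D a b c + D a' b c.
Proof. by rewrite /D !(tpDl J) !TD !(tpDl J) ac3 opprD addrACA. Qed.

Lemma DZl k a b c : D (k *: a) b c = k *: D a b c.
Proof. by rewrite /D !(tpZl J) !TZ !(tpZl J) scalerBr !scalerDr. Qed.

Lemma DDm a b b' c : D a (b + b') c = D a b c + D a b' c.
Proof. by rewrite /D !(tpDm J) !TD !(tpDm J) ac3 opprD addrACA. Qed.

Lemma DZm k a b c : D a (k *: b) c = conjc k *: D a b c.
Proof. by rewrite /D !(tpZm J) !TZ !(tpZm J) scalerBr !scalerDr. Qed.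

Lemma DDr a b c c' : D a b (c + c') = D a b c + D a b c'.
Proof. by rewrite Dsym DDl (Dsym c) (Dsym c'). Qed.

Lemma DZr k a b c : D a b (k *: c) = k *: D a b c.
Proof. by rewrite Dsym DZl (Dsym c). Qed.

Lemma DNl a b c : D (- a) b c = - D a b c.
Proof. by rewrite -scaleN1r DZl scaleN1r. Qed.
Lemma DNm a b c : D a (- b) c = - D a b c.
Proof. by rewrite -scaleN1r DZm rmorphN1 scaleN1r. Qed.
Lemma DNr a b c : D a b (- c) = - D a b c.
Proof. by rewrite -scaleN1r DZr scaleN1r. Qed.

Lemma acP1 (a b c d : E) : (0 + a + (b + c)) + ((a + d) + (c + 0)) = a *+ 2 + b + (c *+ 2 + d).
Proof.
rewrite add0r addr0 !mulr2n -!addrA; congr (_ + _).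
by rewrite [c + (a + _)]addrCA addrCA [d + c]addrC.
Qed.

Lemma mul2_inj (v : E) : v *+ 2 = 0 -> v = 0.
Proof.
move/(congr1 (fun u => (2%:R : R[i])^-1 *: u)).
by rewrite -(scaler_nat 2 v) scalerA mulVf ?scale1r ?scaler0 // pnatr_eq0.
Qed.

Lemma conji : conjc ('i : R[i]) = - 'i.
Proof. by apply/eqP; rewrite eq_complex /= !eqxx /= oppr0 eqxx. Qed.
Lemma ineq0 : ('i : R[i]) != 0.
Proof. apply/eqP => /(congr1 (@complex.Im R)) /= /eqP; by rewrite oner_eq0. Qed.

Section Polar.
Hypothesis h3 : forall x, D x x x = 0.

Lemma P1 x y : D x x y *+ 2 + D x y x + (D x y y *+ 2 + D y x y) = 0.
Proof.
have := h3 (x + y).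
rewrite DDl !DDm !DDr !h3 (Dsym y x x) (Dsym y y x).
by rewrite acP1.
Qed.

Lemma Uzero x y : D x x y *+ 2 + D x y x = 0.
Proof.
have h1 := P1 x y.
have h2 := P1 x (- y).
rewrite !DNr !DNm !DNl !opprK mulNrn -opprD in h2.
apply: mul2_inj.
move: h1 h2; set U := _ + D x y x; set W := _ + D y x y => h1 h2.
have -> : U *+ 2 = (U + W) - (- U + W) by rewrite opprD opprK addrACA subrr addr0 mulr2n.
by rewrite h1 h2 subrr.
Qed.

Lemma DA x y : D x y x = 0.
Proof.
have h1 := Uzero x y.
have h2 := Uzero x ('i *: y).
rewrite DZr DZm conji scalerMnr scaleNr -scalerBr in h2.
move/eqP: h2; rewrite scaler_eq0 (negbTE ineq0) /= => /eqP h2.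
apply: mul2_inj.
move: h1 h2; set U := D x x y *+ 2 => h1 h2.
have -> : D x y x *+ 2 = (U + D x y x) - (U - D x y x) by rewrite opprB addrC addrA subrK mulr2n.
by rewrite h1 h2 subrr.
Qed.

Lemma Dall a b c : D a b c = 0.
Proof.
have := DA (a + c) b.
rewrite DDl !DDr !DA add0r addr0 (Dsym c b a) -mulr2n.
exact: mul2_inj.
Qed.
End Polar.
Lemma lin_sum0 (f : E -> E) (phi : R[i] -> R[i]) :
  (forall x y, f (x + y) = f x + f y) -> (forall k x, f (k *: x) = phi k *: f x) ->
  forall n (c : 'I_n -> R[i]) (u : 'I_n -> E), (forall i, f (u i) = 0) ->
  f (\sum_(i < n) c i *: u i) = 0.
Proof.
move=> fD fZ n c u hu.
have f0 : f 0 = 0.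
  have h := fD 0 0; rewrite addr0 in h.
  by apply/(addrI (f 0)); rewrite addr0 -h.
elim/big_ind: _ => //.
  by move=> a b ha hb; rewrite fD ha hb addr0.
by move=> i _; rewrite fZ hu scaler0.
Qed.

Hypothesis hd : triple_derivable_orth J T.
Hypothesis hs : forall e : E, tripotent J e ->
      forall y : E, peirce2_proj J e (T e) y -> star_e J e y = - y.

Lemma D_orth a b c : Pilot.Defs.orthogonal J a b -> D a b c = 0.
Proof. move=> hab; rewrite /D (hd c hab) hab T0 subrr //. Qed.

Lemma D_trip e : tripotent J e -> D e e e = 0.
Proof.
move=> te; rewrite /D.
rewrite (Dtrip te (T := T)); first by rewrite te subrr.
  by move=> a b c hab; exact: hd.
exact: hs.
Qed.

Lemma D_sum n (c : 'I_n -> R[i]) (u : 'I_n -> E) :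
  (forall i, tripotent J (u i)) -> (forall i j, i != j -> Pilot.Defs.orthogonal J (u i) (u j)) ->
  let x := \sum_(i < n) c i *: u i in D x x x = 0.
Proof.
move=> ht ho x.
apply: (@lin_sum0 (fun v => D v x x) id) => //; first by move=> *; rewrite DDl.
  by move=> *; rewrite DZl.
move=> i.
apply: (@lin_sum0 (fun v => D (u i) v x) conjc) => //; first by move=> *; rewrite DDm.
  by move=> *; rewrite DZm.
move=> j.
apply: (@lin_sum0 (fun v => D (u i) (u j) v) id) => //; first by move=> *; rewrite DDr.
  by move=> *; rewrite DZr.
move=> k /=.
case: (eqVneq i j) => [<-|hij]; last exact: D_orth (ho _ _ hij).
case: (eqVneq i k) => [<-|hik]; first exact: D_trip.
by rewrite Dsym; apply: D_orth; apply: ho; rewrite eq_sym.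
Qed.
End Outer.

Section Cont.
Local Open Scope classical_set_scope.
Variable R : realType.
Variable E : completeNormedModType R[i].
Variable J : JBtriple E.
Local Notation tp := (tp J).

Lemma cvg_tp (f1 f2 f3 : E -> E) x :
  f1 t @[t --> x] --> f1 x -> f2 t @[t --> x] --> f2 x -> f3 t @[t --> x] --> f3 x ->
  tp (f1 t) (f2 t) (f3 t) @[t --> x] --> tp (f1 x) (f2 x) (f3 x).
Proof.
move=> h1 h2 h3.
have hp : (f1 t, (f2 t, f3 t)) @[t --> x] --> (f1 x, (f2 x, f3 x)).
  exact: (cvg_pair h1 (cvg_pair h2 h3)).
have := @continuous_cvg _ _ _ (nbhs x) _ (fun t => (f1 t, (f2 t, f3 t))) _ _ (@tp_cont _ _ J (f1 x, (f2 x, f3 x))) hp.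
exact.
Qed.

Lemma cvg_T (T : E -> E) : bounded_linear T -> forall x, T t @[t --> x] --> T x.
Proof.
move=> [Tlin [M hM]] x.
apply/cvgrPdist_lt => eps eps0.
set M' := `|M| + 1.
have M'0 : 0 < M' by rewrite /M' ltr_wpDl.
apply/nbhs_normP; exists (eps / M'); first by rewrite /= divr_gt0.
move=> t /= hxt.
have -> : T x - T t = T (x - t).
  by have h := Tlin (-1) t x; rewrite !scaleN1r in h; rewrite [x - t]addrC h addrC.
have h1 := hM (x - t).
have h2 : `|T (x - t)| <= `|M| * `|x - t|.
  have -> : `|M| * `|x - t| = `|M * `|x - t| | by rewrite normrM normr_id.
  by rewrite (ger0_norm (le_trans (normr_ge0 _) h1)).
apply: (le_lt_trans h2).
apply: (le_lt_trans (y := M' * `|x - t|)).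
  by rewrite ler_wpM2r ?normr_ge0 // /M' lerDl ler01.
by rewrite -(ltr_pM2l M'0) in hxt; rewrite (lt_le_trans hxt) // mulrC divfK // gt_eqF.
Qed.
End Cont.

Local Open Scope classical_set_scope.
Theorem mainTheorem11 (R : realType) (E : completeNormedModType R[i])
  (J : JBtriple E) (T : E -> E) :
  tripotents_norm_total J ->
  bounded_linear T ->
  (triple_derivation J T <->
   (triple_derivable_orth J T /\
    forall e : E, tripotent J e ->
      forall y : E, peirce2_proj J e (T e) y -> star_e J e y = - y)).
Proof.
move=> htot hbl; have Tlin := hbl.1.
split.
  move=> hder; split.
    move=> a b c hab.
    by rewrite -hder (hab c) (T0 Tlin).
  move=> e te y [hy [y1 [y0 [h1 [h0 hx]]]]].
  rewrite /star_e.
  apply: (deriv_skew te _ hy h1 h0 hx).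
  have h := hder e e e; rewrite te in h.
  by rewrite -h.
move=> [hd hs].
have h3 : forall x, D J T x x x = 0.
  move=> x.
  pose g := fun t => D J T t t t.
  have cg : g t @[t --> x] --> g x.
    have ha : T (tp J t t t) @[t --> x] --> T (tp J x x x).
      have := @continuous_cvg _ _ _ (nbhs x) _ (fun t => tp J t t t) _ _ (cvg_T hbl (x:=tp J x x x)) (cvg_tp (J:=J) cvg_id cvg_id cvg_id).
      exact.
    have hb1 := cvg_tp (J:=J) (cvg_T hbl (x:=x)) cvg_id cvg_id.
    have hb2 := cvg_tp (J:=J) cvg_id (cvg_T hbl (x:=x)) cvg_id.
    have hb3 := cvg_tp (J:=J) cvg_id cvg_id (cvg_T hbl (x:=x)).
    have := cvgB ha (cvgD (cvgD hb1 hb2) hb3).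
    exact.
  case: (eqVneq (g x) 0) => // hne.
  have p0 : 0 < `|g x| by rewrite normr_gt0.
  move/cvgrPdist_lt: cg => /(_ _ p0) /nbhs_normP [d /= d0 hdd].
  have [n [c [u [ht [ho hn]]]]] := htot x d d0.
  have := hdd _ hn; rewrite /= /g (D_sum Tlin hd hs c ht ho) subr0.
  by rewrite ltxx.
move=> a b c.
have := Dall Tlin h3 a b c.
by rewrite /D => /eqP; rewrite subr_eq0 => /eqP.
Qed.
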